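(* Let $\mathcal{G}=(\mathcal{V},\mathcal{E})$ be an undirected graph with $|\mathcal{N}_i|\ge (d+1)F+1$ for every $i\in\mathcal{V}$, and suppose the misbehaving agents follow either the $F$-local or the $F$-total attack model. If the benign agents run the resilient multi-dimensional consensus algorithm described in the context (with arbitrary admissible choices of the middle points), then for every $k\ge 0$, $\varOmega(k+1)\subset\varOmega(k)$.
   Context: $\mathcal{G}=(\mathcal{V},\mathcal{E})$ is undirected, $\mathcal{N}_i=\{j\in\mathcal{V}: e_{ij}\in\mathcal{E}\}$. $\mathcal{V}=\mathcal{B}\cup\mathcal{F}$ disjointly; $\mathcal{F}$ are misbehaving agents, which may send arbitrary (possibly different to different neighbors, possibly colluding) values at each time; $\mathcal{B}$ are benign agents following the algorithm. $F$-total attack model: $|\mathcal{F}|\le F$. $F$-local attack model: $|\mathcal{F}\cap\mathcal{N}_i|\le F$ for all $i\in\mathcal{V}$. For a finite multiset $\mathcal{A}\subset\mathbb{R}^d$ of cardinality $m$ (counted with multiplicity) and integer $0\le n\le m$, let $\mathcal{S}(\mathcal{A},n)$ be the collection of all sub-multisets of $\mathcal{A}$ of cardinality $m-n$, and $\varPsi(\mathcal{A},n)=\bigcap_{S\in\mathcal{S}(\mathcal{A},n)}\mathrm{Conv}(S)$. Algorithm: each benign agent $i$ has state $x^i(k)\in\mathbb{R}^d$. At each time $k$: (1) $i$ collects in the multiset $\mathcal{X}^i(k)$ the values received from all $j\in\mathcal{N}_i$; (2) with $p=(k \bmod d)+1$, it sorts the points of $\mathcal{X}^i(k)$ in ascending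 order of their $p$-th entries; (3) $\mathcal{Y}^i(k)$ is the multiset of the first $(d+1)F+1$ sorted points, and $y^i(k)$ is any point of $\varPsi(\mathcal{Y}^i(k),F)$; (4) $\mathcal{Z}^i(k)$ is the multiset of the last $(d+1)F+1$ sorted points, and $z^i(k)$ is any point of $\varPsi(\mathcal{Z}^i(k),F)$; (5) $x^i(k+1)=\frac{1}{3}\big(x^i(k)+y^i(k)+z^i(k)\big)$, which is sent to all neighbors. $\varOmega(k)$ denotes the convex hull of $\{x^i(k): i\in\mathcal{B}\}$. *)

(* Defs.v *)
From HB Require Import structures.
From mathcomp Require Import all_boot all_order all_algebra.
Set Implicit Arguments. Unset Strict Implicit. Unset Printing Implicit Defensive.
Import Order.TTheory GRing.Theory Num.Theory.
Local Open Scope ring_scope.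

(* Conv: x lies in the convex hull of the finite (multi)family of points
   {f i : i \in P} (points are indexed, so repetitions = multiplicities). *)
Definition inConv (R : realFieldType) (d : nat) (I : finType) (P : {set I})
  (f : I -> 'rV[R]_d) (x : 'rV[R]_d) : Prop :=
  exists lam : I -> R,
    [/\ forall i, 0 <= lam i,
        forall i, i \notin P -> lam i = 0,
        \sum_(i in P) lam i = 1
      & x = \sum_(i in P) lam i *: f i].

Definition inPsi (R : realFieldType) (d : nat) (I : finType) (P : {set I})
  (f : I -> 'rV[R]_d) (n : nat) (x : 'rV[R]_d) : Prop :=
  forall Q : {set I}, Q \subset P -> (#|Q| + n)%N = #|P| -> inConv Q f x.

(* the p-th entry (0-based) of a row vector; 0 if p is out of range *)
Definition entry (R : realFieldType) (d : nat) (v : 'rV[R]_d) (p : nat) : R :=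
  if @insub nat (fun q => q < d)%N _ p is Some j then v ord0 j else 0.

Definition nbhd (V : finType) (e : rel V) (i : V) : {set V} := [set j | e i j].

(* Main.v *)
Require Import Defs.
From HB Require Import structures.
From mathcomp Require Import all_boot all_order all_algebra.
From Stdlib Require Import IndefiniteDescription.
From mathcomp Require Import zify ring lra.
Import Order.TTheory GRing.Theory Num.Theory.
Local Open Scope ring_scope.

Lemma inConv_pt (R : realFieldType) (d : nat) (I : finType) (P : {set I})
  (g : I -> 'rV[R]_d) j : j \in P -> inConv P g (g j).
Proof.
move=> jP; exists (fun i => if i == j then 1 else 0); split.
- by move=> i; case: eqP.
- by move=> i iP; case: eqP => // ie; rewrite ie jP in iP.
- rewrite (bigD1 j) //= eqxx big1 ?addr0 // => i /andP[_ /negbTE ->] //.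
- rewrite (bigD1 j) //= eqxx scale1r big1 ?addr0 // => i /andP[_ /negbTE ->].
  by rewrite scale0r.
Qed.

Lemma inConv_trans (R : realFieldType) (d : nat) (I J : finType) (P : {set I})
  (Q : {set J}) (f : I -> 'rV[R]_d) (g : J -> 'rV[R]_d) w :
  inConv P f w -> (forall i, i \in P -> inConv Q g (f i)) -> inConv Q g w.
Proof.
move=> [lam [l0 lout l1 ->]] H.
have H' : forall i, exists mu : J -> R, i \in P ->
   [/\ forall j, 0 <= mu j, forall j, j \notin Q -> mu j = 0,
        \sum_(j in Q) mu j = 1 & f i = \sum_(j in Q) mu j *: g j].
  move=> i; case: (boolP (i \in P)) => iP.
    by have [mu hmu] := H i iP; exists mu.
  by exists (fun _ => 0).
pose mu i := proj1_sig (constructive_indefinite_description _ (H' i)).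
have hmu : forall i, i \in P ->
   [/\ forall j, 0 <= mu i j, forall j, j \notin Q -> mu i j = 0,
        \sum_(j in Q) mu i j = 1 & f i = \sum_(j in Q) mu i j *: g j].
  by move=> i; exact: (proj2_sig (constructive_indefinite_description _ (H' i))).
clearbody mu.
exists (fun j => \sum_(i in P) lam i * mu i j); split.
- move=> j; apply: sumr_ge0 => i iP; apply: mulr_ge0 => //.
  by have [h _ _ _] := hmu i iP; apply: h.
- move=> j jQ; apply: big1 => i iP; have [_ -> //] := hmu i iP; by rewrite mulr0.
- rewrite exchange_big /= -l1; apply: eq_bigr => i iP.
  by rewrite -mulr_sumr; have [_ _ -> _] := hmu i iP; rewrite mulr1.
- rewrite (eq_bigr (fun i => \sum_(j in Q) (lam i * mu i j) *: g j)); last first.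
    move=> i iP; have [_ _ _ ->] := hmu i iP.
    by rewrite scaler_sumr; apply: eq_bigr => j _; rewrite scalerA.
  rewrite exchange_big /=; apply: eq_bigr => j _; by rewrite scaler_suml.
Qed.

Lemma inConv_comb (R : realFieldType) (d : nat) (I : finType) (P : {set I})
  (g : I -> 'rV[R]_d) a b s t : inConv P g a -> inConv P g b ->
  0 <= s -> 0 <= t -> s + t = 1 -> inConv P g (s *: a + t *: b).
Proof.
move=> ha hb s0 t0 st.
pose f (c : bool) := if c then a else b.
have -> : s *: a + t *: b = s *: f true + t *: f false by [].
apply: (@inConv_trans _ _ _ _ [set: bool] _ f) => [|c _]; last by case: c.
exists (fun c : bool => if c then s else t); split => //.
- by case.
- by case; rewrite in_setT.
- by rewrite (eq_bigl (fun _ => true)) ?big_bool /= // => c; rewrite in_setT.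
- by rewrite (eq_bigl (fun _ => true)) ?big_bool /= // => c; rewrite in_setT.
Qed.

Lemma exists_subset (T : finType) (G : {set T}) k :
  (k <= #|G|)%N -> exists2 Q : {set T}, Q \subset G & #|Q| = k.
Proof.
elim: k => [|k IH] hk; first by exists set0; rewrite ?sub0set ?cards0.
have [Q QG cQ] := IH (ltnW hk).
have : (0 < #|G :\: Q|)%N by rewrite cardsD (setIidPr QG) cQ subn_gt0.
case/card_gt0P => x; rewrite inE => /andP[xQ xG].
exists (x |: Q); first by rewrite subUset sub1set xG QG.
by rewrite cardsU1 xQ cQ.
Qed.
Theorem proposition1
  (R : realFieldType) (d F : nat) (hd : (0 < d)%N)
  (V : finType) (e : rel V)
  (e_sym : symmetric e) (e_irr : irreflexive e)
  (hdeg : forall i : V, ((d.+1) * F + 1 <= #|nbhd e i|)%N)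
  (B : {set V})   (* benign agents; the misbehaving ones are ~: B *)
  (hatt : (forall i : V, #|~: B :&: nbhd e i| <= F)%N \/ (#|~: B| <= F)%N)
  (x : V -> nat -> 'rV[R]_d)             (* states x^i(k) *)
  (msg : nat -> V -> V -> 'rV[R]_d)      (* msg k j i : value sent by j to i at time k *)
  (hmsg : forall k j i, j \in B -> msg k j i = x j k)
  (hstep : forall (i : V) (k : nat), i \in B ->
     exists (sigma : 'I_#|nbhd e i| -> V) (y z : 'rV[R]_d),
       let pts := fun t => msg k (sigma t) i in
       let p := (k %% d)%N in
       [/\ injective sigma /\ (forall t, sigma t \in nbhd e i),
           forall t1 t2 : 'I_#|nbhd e i|, (t1 <= t2)%N ->
              entry (pts t1) p <= entry (pts t2) p,
           inPsi [set t : 'I_#|nbhd e i| | (t < (d.+1) * F + 1)%N] pts F y,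
           inPsi [set t : 'I_#|nbhd e i| |
                    (#|nbhd e i| - ((d.+1) * F + 1) <= t)%N] pts F z
         & x i k.+1 = 3^-1 *: (x i k + y + z)]) :
  forall (k : nat) (w : 'rV[R]_d),
    inConv B (fun i => x i k.+1) w -> inConv B (fun i => x i k) w.
Proof.
move=> k w hw; apply: (@inConv_trans R d V V B B (fun j => x j k.+1) (fun j => x j k) w hw) => i iB.
have [sigma [y [z /= [[sinj sN] _ hy hz ->]]]] := hstep i k iB.
set n := #|nbhd e i| in sigma sinj sN hy hz *.
set m := ((d.+1) * F + 1)%N in hy hz.
have hmn : (m <= n)%N by apply: hdeg.
have hFm : (F <= m)%N by rewrite /m mulSn; lia.
have key : forall (P : {set 'I_n}) v, (F <= #|P|)%N ->
    inPsi P (fun t => msg k (sigma t) i) F v -> inConv B (fun j => x j k) v.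
  move=> P v hP hv.
  set G := [set t | sigma t \in B].
  have bad : (#|P :\: G| <= F)%N.
    have h1 : (#|P :\: G| <= #|~: G|)%N by apply/subset_leq_card; rewrite setDE subsetIr.
    apply: leq_trans h1 _.
    rewrite -(card_imset _ sinj).
    case: hatt => h; [apply: leq_trans (h i) | apply: leq_trans h];
      apply/subset_leq_card; apply/subsetP => _ /imsetP[t tG ->];
      by rewrite !inE in tG *; rewrite tG //=; move: (sN t); rewrite inE.
  have [Q QG cQ] : exists2 Q : {set 'I_n}, Q \subset P :&: G & #|Q| = (#|P| - F)%N.
    have e1 : (#|P :&: G| + #|P :\: G| = #|P|)%N by rewrite -(cardsID G P) setIC.
    apply: exists_subset; lia.
  have := hv Q (subset_trans QG (subsetIl _ _)).
  rewrite cQ subnK // => /(_ erefl) hQ.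
  apply: (@inConv_trans R d _ V Q B _ (fun j => x j k) v hQ) => t tQ.
  have : t \in G by move/subsetP: QG => /(_ t tQ); rewrite inE => /andP[].
  rewrite inE => stB; rewrite hmsg //; exact: inConv_pt.
have cardP : forall (P : {set 'I_n}) (h : 'I_m -> 'I_n), injective h ->
    (forall j, h j \in P) -> (F <= #|P|)%N.
  move=> P h hinj hP; apply: leq_trans hFm _.
  have <- : #|h @: [set: 'I_m]| = m by rewrite card_imset // cardsT card_ord.
  by apply: subset_leq_card; apply/subsetP => _ /imsetP[j _ ->].
have hy' : inConv B (fun j => x j k) y.
  apply: key hy; apply: (cardP _ (fun j : 'I_m => widen_ord hmn j)).
    by move=> j1 j2 /(congr1 val) /= /val_inj.
  by move=> j; rewrite inE /=.
have hz' : inConv B (fun j => x j k) z.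
  have lt (j : 'I_m) : (n - m + j < n)%N by have := ltn_ord j; lia.
  apply: key hz; apply: (cardP _ (fun j : 'I_m => Ordinal (lt j))).
    by move=> j1 j2 /(congr1 val) /= /addnI /val_inj.
  by move=> j; rewrite inE /= leq_addr.
have hx := @inConv_pt R d V B (fun j => x j k) i iB.
have -> : 3^-1 *: (x i k + y + z) =
   3^-1 *: x i k + (1 - 3^-1) *: (2^-1 *: y + (1 - 2^-1) *: z).
  have h2 : (1 - 2^-1 : R) = 2^-1 by field.
  have h3 : ((1 - 3^-1) * 2^-1 : R) = 3^-1 by field.
  by rewrite h2 !scalerDr !scalerA h3 addrA.
have hp (r : R) : 0 <= r -> r <= 1 -> [/\ 0 <= r, 0 <= 1 - r & r + (1 - r) = 1].
  by move=> h0 h1; split => //; [rewrite subr_ge0 | rewrite addrC subrK].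
have [a0 a1 a2] : [/\ 0 <= 3^-1 :> R, 0 <= 1 - 3^-1 :> R & 3^-1 + (1 - 3^-1) = 1 :> R].
  by apply: (hp 3^-1); [rewrite invr_ge0 ler0n | rewrite invf_le1 ?ler1n ?ltr0n].
have [b0 b1 b2] : [/\ 0 <= 2^-1 :> R, 0 <= 1 - 2^-1 :> R & 2^-1 + (1 - 2^-1) = 1 :> R].
  by apply: (hp 2^-1); [rewrite invr_ge0 ler0n | rewrite invf_le1 ?ler1n ?ltr0n].
by apply: inConv_comb => //; apply: inConv_comb.
Qed.
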